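(* Let $G$ be a connected graph on $n$ vertices and $m$ edges. If all the cycles of $G$ are pairwise vertex disjoint, then $G\in\mathcal{P}_n$.
   Context: Graphs are finite, simple and undirected. $\mathbb{T}=\{z\in\mathbb{C}:|z|=1\}$, $\mathbb{I}=[0,2\pi)$. A $\mathbb{T}$-gain on $G$ is a map $\varphi$ from oriented edges to $\mathbb{T}$ with $\varphi(\overrightarrow{e_{ts}})=\varphi(\overrightarrow{e_{st}})^{-1}$; $A(\Phi)$ for $\Phi=(G,\varphi)$ is the Hermitian matrix with $(s,t)$ entry $\varphi(\overrightarrow{e_{st}})$ if $v_s\sim v_t$, else $0$; $\mathcal{T}_G$ is the set of all $\mathbb{T}$-gain graphs on $G$. For a complex matrix $A=B+iC$ with $B,C$ real, $\Re(A)=B$, and $\Re(A)\ge0$ means all entries of $B$ are nonnegative. The gain of a directed cycle is the product of gains of its oriented edges. A rooted spanning tree $T$ with root $v_r$ induces the tree order ($v_x\le v_y$ iff $v_x$ is on the $T$-path from $v_r$ to $v_y$); $T$ is normal if adjacent vertices of $G$ are always comparable. The suitably oriented graph $\overrightarrow{G_T}$ orients each edge $e_{st}$ with $v_s\le v_t$ as $\overrightarrow{e_{st}}$ if $e_{st}\in E(T)$ and as $\overrightarrow{e_{ts}}$ otherwise; the $m-n+1$ fundamental cycles of $T$ become directed cycles $\overrightarrow{C_j(T)}$. For $r=(c_1,\dots,c_{m-n+1})\in\mathbb{I}^{m-n+1}$, $\mathcal{A}_T(r)=\{(G,\varphi)\in\mathcal{T}_G:\varphi(\overrightarrow{C_j(T)})=e^{ic_j}\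 \forall j\}$. A connected graph $G$ with normal spanning tree $T$ has property GNRP if for each $r\in\mathbb{I}^{m-n+1}$ there exists $\Phi\in\mathcal{A}_T(r)$ with $\Re(A(\Phi))\ge0$. $\mathcal{P}_n$ (or $\mathcal{P}$) is the collection of connected graphs on $n$ vertices with property GNRP. *)

(* Defs.v *)
From HB Require Import structures.
From mathcomp Require Import all_boot all_order all_algebra.
From mathcomp Require Import complex.
From mathcomp Require Import reals trigo.
Set Implicit Arguments. Unset Strict Implicit. Unset Printing Implicit Defensive.
Import Order.TTheory GRing.Theory Num.Theory.
Local Open Scope ring_scope.

Section GainGraphs.
Variables (R : realType) (n : nat).
Implicit Types (G : rel 'I_n).

Definition simple_graph G : Prop := symmetric G /\ irreflexive G.

Definition connected_graph G : Prop := forall x y : 'I_n, connect G x y.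

Definition graph_cycle G (c : seq 'I_n) : Prop :=
  [/\ ucycle G c & (3 <= size c)%N].

Definition cycle_edge (c : seq 'I_n) (x y : 'I_n) : bool :=
  (x \in c) && (y \in c) && ((y == next c x) || (x == next c y)).

(** All cycles pairwise vertex disjoint: two cycles sharing a vertex are the
    same cycle (same edge set). *)
Definition cycles_vertex_disjoint G : Prop :=
  forall c1 c2 : seq 'I_n, graph_cycle G c1 -> graph_cycle G c2 ->
    (exists v, (v \in c1) && (v \in c2)) ->
    forall x y, cycle_edge c1 x y = cycle_edge c2 x y.

(** T-gain graphs on G: phi (s,t) is the gain of the oriented edge e_st
    (only its values on adjacent pairs matter). *)
Definition T_gain G (phi : 'I_n -> 'I_n -> R[i]) : Prop :=
  forall s t, G s t -> `|phi s t| = 1 /\ phi t s = (phi s t)^-1.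

Definition gain_adj G (phi : 'I_n -> 'I_n -> R[i]) : 'M[R[i]]_n :=
  \matrix_(s, t) (if G s t then phi s t else 0).

(** Rooted spanning trees, encoded by their root rt and parent map p:
    E(T) = { {v, p v} : v <> rt }. *)
Definition rooted_spanning_tree G (rt : 'I_n) (p : 'I_n -> 'I_n) : Prop :=
  [/\ p rt = rt,
      (forall v, v != rt -> G v (p v)) &
      (forall v, rt \in traject p v n)].

(** Tree order: x <= y iff x lies on the T-path from the root to y,
    i.e. x is one of y, p y, p (p y), ... *)
Definition tree_le (p : 'I_n -> 'I_n) (x y : 'I_n) : bool := x \in traject p y n.

Definition tree_edge (p : 'I_n -> 'I_n) (s t : 'I_n) : bool :=
  (p t == s) || (p s == t).

Definition normal_tree G (p : 'I_n -> 'I_n) : Prop :=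
  forall x y, G x y -> tree_le p x y || tree_le p y x.

(** Non-tree edges e_st with v_s <= v_t: each determines the fundamental
    cycle C(T, e_st), oriented in the suitably oriented graph as the T-path
    from v_s down to v_t followed by the arc (v_t, v_s). *)
Definition fundamental (G : rel 'I_n) (p : 'I_n -> 'I_n) (s t : 'I_n) : bool :=
  [&& G s t, ~~ tree_edge p s t & tree_le p s t].

(** Gain of the directed fundamental cycle for the non-tree edge e_st:
    product of phi(p w, w) over the vertices w <> v_s on the tree path
    from v_t up to v_s, times phi(t, s). *)
Definition fund_cycle_gain (p : 'I_n -> 'I_n) (phi : 'I_n -> 'I_n -> R[i])
    (s t : 'I_n) : R[i] :=
  (\prod_(k < index s (traject p t n))
      phi (iter k.+1 p t) (iter k p t)) * phi t s.

Definition expi (c : R) : R[i] := (cos c +i* sin c)%C.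

(** Property GNRP of G with respect to the normal rooted spanning tree
    (rt, p): for each assignment r of angles in [0, 2 pi) to the fundamental
    cycles there is Phi in A_T(r) with Re(A(Phi)) >= 0. *)
Definition GNRP G (p : 'I_n -> 'I_n) : Prop :=
  forall r : 'I_n -> 'I_n -> R,
    (forall s t, fundamental G p s t -> 0 <= r s t < 2 * pi) ->
    exists phi, [/\ T_gain G phi,
      (forall s t, fundamental G p s t -> fund_cycle_gain p phi s t = expi (r s t)) &
      (forall s t, 0 <= complex.Re (gain_adj G phi s t))].

End GainGraphs.

(* Main.v *)
Require Import Defs.
From HB Require Import structures.
From mathcomp Require Import all_boot all_order all_algebra.
From mathcomp Require Import complex.
From mathcomp Require Import reals trigo.
From mathcomp Require Import ring lra.
Set Implicit Arguments. Unset Strict Implicit. Unset Printing Implicit Defensive.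
Import Order.TTheory GRing.Theory Num.Theory.

Section Graph.
Variables (n : nat) (G : rel 'I_n) (rt : 'I_n) (p : 'I_n -> 'I_n).
Hypothesis sG : simple_graph G.
Hypothesis rst : rooted_spanning_tree G rt p.

Lemma iter_rt k : iter k p rt = rt.
Proof. case: rst => prt _ _; elim: k => //= k ->; exact: prt. Qed.

Lemma reach_rt y : exists k, iter k p y = rt.
Proof. case: rst => _ _ /(_ y) /trajectP [k _ ->]; by exists k. Qed.

Lemma fixed_rt y m : (0 < m)%N -> iter m p y = y -> y = rt.
Proof.
move=> m0 hy; have [k hk] := reach_rt y.
have e : forall j, iter (m * j) p y = y.
  elim=> [|j IH]; first by rewrite muln0.
  by rewrite mulnS iterD IH hy.
rewrite -(e k).
have -> : (m * k = (m * k - k) + k)%N by rewrite subnK // leq_pmull.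
by rewrite iterD hk iter_rt.
Qed.

Lemma tree_le_antisym x y : tree_le p x y -> tree_le p y x -> x = y.
Proof.
move=> /trajectP [i _ ->] /trajectP [j _ hj].
case: i hj => [|i] hj //.
have : iter (j + i.+1) p y = y by rewrite iterD -hj.
move/fixed_rt; rewrite addnS => /(_ isT) ->; by rewrite iter_rt.
Qed.

Lemma no2cycle a b : p a = b -> p b = a -> a = b.
Proof.
move=> ha hb; have : iter 2 p a = a by rewrite /= ha hb.
move/fixed_rt => /(_ isT) ar; move: ha; rewrite ar; case: rst => -> _ _ //.
Qed.

Lemma uniq_traj x m : (forall i j, (i < j < m)%N -> iter i p x != iter j p x) ->
  uniq (traject p x m).
Proof.
elim: m => [|m IH] h //; rewrite trajectSr rcons_uniq IH ?andbT.
- apply/trajectP => -[i im e]; move: (h i m); rewrite im ltnSn e eqxx; by move/(_ isT).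
- move=> i j /andP [ij jm]; apply h; by rewrite ij ltnW.
Qed.

Lemma path_tree m x : (forall k, (k < m)%N -> iter k p x != rt) ->
   path G x (traject p (p x) m).
Proof.
elim: m x => [|m IH] x h //=.
case: rst => _ hG _; rewrite hG ?(h 0%N) //=.
apply: IH => k km; rewrite -iterSr; exact: h.
Qed.

Section Fund.
Variables s t : 'I_n.
Hypothesis F : fundamental G p s t.
Let k0 := index s (traject p t n).

Lemma k0_lt : (k0 < n)%N.
Proof. move: F => /and3P [_ _ h]; by rewrite /k0 -[X in (_ < X)%N](size_traject p t n) index_mem. Qed.

Lemma iter_k0 : iter k0 p t = s.
Proof. move: F => /and3P [_ _ h]; by rewrite -(nth_traject p k0_lt) nth_index. Qed.

Lemma before_k0 k : (k < k0)%N -> iter k p t != s.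
Proof.
move=> kk; rewrite -(nth_traject p (ltn_trans kk k0_lt)).
apply/negbT; exact: (before_find t kk).
Qed.

Lemma k0_ge2 : (2 <= k0)%N.
Proof.
move: F => /and3P [Gst tst _].
case E: k0 => [|[|k]] //.
- have := iter_k0; rewrite E /= => ee; move: Gst; rewrite ee; by case: sG => _ ->.
- have := iter_k0; rewrite E /= => ee; move: tst; by rewrite /tree_edge ee eqxx.
Qed.

Lemma distinct_k0 i j : (i < j <= k0)%N -> iter i p t != iter j p t.
Proof.
move=> /andP [ij jk]; apply/eqP => e.
have : iter (j - i) p (iter i p t) = iter i p t by rewrite -iterD subnK ?e // ltnW.
move/fixed_rt; rewrite subn_gt0 => /(_ ij) er.
have : iter k0 p t = iter i p t.
  by rewrite -(subnK (ltnW (leq_trans ij jk))) iterD er iter_rt.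
rewrite iter_k0 => /esym/eqP; rewrite (negbTE (before_k0 (leq_trans ij jk))) //.
Qed.

Lemma nonroot_k0 k : (k < k0)%N -> iter k p t != rt.
Proof.
move=> kk; apply/eqP => er.
have : iter k0 p t = iter k p t by rewrite -(subnK (ltnW kk)) iterD er iter_rt.
rewrite iter_k0 => /esym/eqP; rewrite (negbTE (before_k0 kk)) //.
Qed.

Definition fcyc := traject p t k0.+1.

Lemma fcyc_uniq : uniq fcyc.
Proof. apply: uniq_traj => i j; rewrite ltnS; exact: distinct_k0. Qed.

Lemma fcyc_graph_cycle : graph_cycle G fcyc.
Proof.
split; last by rewrite size_traject ltnS k0_ge2.
rewrite /ucycle fcyc_uniq andbT (cycle_path t) /fcyc /= last_traject iter_k0.
move: F => /and3P [-> _ _] /=; exact: path_tree nonroot_k0.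
Qed.

End Fund.

Lemma next_traj x m j : uniq (traject p x m.+1) -> (j <= m)%N ->
  next (traject p x m.+1) (iter j p x) = if (j < m)%N then iter j.+1 p x else x.
Proof.
move=> u jm.
have jin : iter j p x \in traject p x m.+1 by apply/trajectP; exists j.
rewrite next_nth jin.
have -> : index (iter j p x) (traject p x m.+1) = j.
  by rewrite -(nth_traject p (jm : (j < m.+1)%N)) index_uniq // size_traject.
rewrite [traject _ _ _.+1]/=.
case: ltnP => jm'.
  by rewrite (set_nth_default (p x)) ?size_traject // nth_traject // iterSr.
by rewrite nth_default // size_traject.
Qed.

Hypothesis cvd : cycles_vertex_disjoint G.

Lemma in_fcyc s t j : (j <= index s (traject p t n))%N -> iter j p t \in fcyc s t.
Proof. move=> h; apply/trajectP; by exists j. Qed.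

Lemma fund_unique s t s' t' w : fundamental G p s t -> fundamental G p s' t' ->
  w \in traject p t (index s (traject p t n)) ->
  w \in traject p t' (index s' (traject p t' n)) -> s = s' /\ t = t'.
Proof.
move=> F F' /trajectP [i ik ->] /trajectP [i' ik' e].
have CE := cvd (fcyc_graph_cycle F) (fcyc_graph_cycle F').
have ex : exists v, (v \in fcyc s t) && (v \in fcyc s' t').
  by exists (iter i p t); rewrite (in_fcyc (ltnW ik)) e (in_fcyc (ltnW ik')).
have hs : s \in fcyc s t.
  by apply/trajectP; exists (index s (traject p t n)); rewrite ?(iter_k0 F).
have ht : t \in fcyc s t by apply/trajectP; exists 0%N.
have nx := next_traj (fcyc_uniq F) (leqnn _).
rewrite ltnn (iter_k0 F) in nx.
have c1 : cycle_edge (fcyc s' t') s t by rewrite -CE // /cycle_edge hs ht /fcyc nx eqxx.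
move: c1; rewrite /cycle_edge.
case/andP => /andP [hs' ht'] hor.
rewrite /fcyc in hs' ht'.
have [j jk ej] := trajectP hs'.
have [j' jk' ej'] := trajectP ht'.
move: (F) => /and3P [Gst tst lst].
have nS : next (fcyc s' t') s = if (j < index s' (traject p t' n))%N then p s else t'.
  by rewrite ej /fcyc (next_traj (fcyc_uniq F') jk) iterS.
have nT : next (fcyc s' t') t = if (j' < index s' (traject p t' n))%N then p t else t'.
  by rewrite ej' /fcyc (next_traj (fcyc_uniq F') jk') iterS.
move: hor; rewrite /fcyc in nS nT; rewrite nS nT.
case/orP; case: ltnP => hj /eqP hh.
- move: tst; by rewrite /tree_edge hh eqxx orbT.
- have ejj : j = index s' (traject p t' n) by apply/anti_leq; rewrite hj -ltnS jk.
  by rewrite hh ej ejj (iter_k0 F').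
- move: tst; by rewrite /tree_edge hh eqxx.
- have ejj : j' = index s' (traject p t' n) by apply/anti_leq; rewrite hj -ltnS jk'.
  move: lst Gst; rewrite hh ej' ejj (iter_k0 F') => lst.
  move: (F') => /and3P [_ _ l2].
  rewrite (tree_le_antisym lst l2); by case: sG => _ ->.
Qed.

End Graph.

Local Open Scope ring_scope.
Local Open Scope complex_scope.

Section Expi.
Variable R : realType.
Implicit Types x y : R.

Lemma expiD x y : expi (x + y) = expi x * expi y.
Proof. rewrite /expi cosD sinD /=; congr (_ +i* _); ring. Qed.

Lemma expi0 : expi (0 : R) = 1.
Proof. by rewrite /expi cos0 sin0. Qed.

Lemma expi_neq0 x : expi x != 0.
Proof.
apply/negP => /eqP h; have := expiD x (- x); rewrite subrr expi0 h mul0r.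
move/eqP; by rewrite oner_eq0.
Qed.

Lemma expiN x : expi (- x) = (expi x)^-1.
Proof.
apply: (mulfI (expi_neq0 x)); by rewrite -expiD subrr expi0 divff // expi_neq0.
Qed.

Lemma norm_expi x : `|expi x| = 1.
Proof. by rewrite normc_def /= cos2Dsin2 sqrtr1. Qed.

Lemma Re_expi x : complex.Re (expi x) = cos x.
Proof. by []. Qed.

Lemma expiX x m : expi x ^+ m = expi (x *+ m).
Proof. elim: m => [|m IH]; first by rewrite expr0 mulr0n expi0.
by rewrite exprS IH mulrS expiD. Qed.

Lemma expi2pi x : expi (x - 2 * pi) = expi x.
Proof.
rewrite /expi -(cosD2pi (x - 2 * pi)) -(sinD2pi (x - 2 * pi)).
by rewrite mulr_natl subrK.
Qed.
End Expi.


Section Main.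
Variables (R : realType) (n : nat) (G : rel 'I_n) (rt : 'I_n) (p : 'I_n -> 'I_n)
  (r : 'I_n -> 'I_n -> R).
Hypothesis sG : simple_graph G.
Hypothesis rst : rooted_spanning_tree G rt p.
Hypothesis cvd : cycles_vertex_disjoint G.
Hypothesis hr : forall s t, fundamental G p s t -> 0 <= r s t < 2 * pi.

Definition bnd (x : R) := (- (pi / 2) <= x) && (x <= pi / 2).

Lemma bndN x : bnd x -> bnd (- x).
Proof. rewrite /bnd => /andP [h1 h2]; apply/andP; split; lra. Qed.

Lemma bnd0 : bnd 0.
Proof. have := pi_gt0 R; rewrite /bnd => h; apply/andP; split; lra. Qed.

Definition theta s t : R :=
  let L := ((index s (traject p t n)).+1)%:R in
  if r s t <= pi then r s t / L else (r s t - 2 * pi) / L.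

Lemma theta_bound s t : fundamental G p s t -> bnd (theta s t).
Proof.
move=> F; have k2 := k0_ge2 sG F.
rewrite /theta; set L : R := ((index s (traject p t n)).+1)%:R.
have L3 : 3 <= L by rewrite /L (ler_nat R 3) ltnS.
have Lpos : 0 < L by apply: lt_le_trans L3.
have /andP [r0 r2] := hr F; have pi0 := pi_gt0 R.
have pL : 0 <= pi * (L - 2) by apply: mulr_ge0; lra.
rewrite /bnd; case: ifP => rp; last (move/negbT: rp; rewrite -ltNge => rp);
  apply/andP; split.
- have h : 0 <= r s t / L by apply: divr_ge0; lra.
  apply: le_trans h; rewrite oppr_le0; apply: divr_ge0 => //; exact: ltW.
- rewrite (ler_pdivrMr _ _ Lpos); nra.
- rewrite (ler_pdivlMr _ _ Lpos); nra.
- rewrite (ler_pdivrMr _ _ Lpos); nra.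
Qed.

Definition gw (w : 'I_n) : R :=
  if [pick st : 'I_n * 'I_n | fundamental G p st.1 st.2 &&
        (w \in traject p st.2 (index st.1 (traject p st.2 n)))] is Some st
  then theta st.1 st.2 else 0.

Lemma gw_theta s t w : fundamental G p s t ->
  w \in traject p t (index s (traject p t n)) -> gw w = theta s t.
Proof.
rewrite /gw => F W; case: pickP => [[s' t'] /= /andP [F' W'] | none].
  by have [-> ->] := fund_unique sG rst cvd F' F W' W.
by have := none (s, t); rewrite /= F W.
Qed.

Lemma gw_bound w : bnd (gw w).
Proof.
rewrite /gw; case: pickP => [[s' t'] /= /andP [F' _] | _]; last exact: bnd0.
exact: theta_bound.
Qed.

Definition ang (x y : 'I_n) : R :=
  if p y == x then gw y else if p x == y then - gw x
  else if fundamental G p y x then theta y x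
  else if fundamental G p x y then - theta x y else 0.

Lemma fund_excl a b : fundamental G p a b -> fundamental G p b a -> False.
Proof.
move=> /and3P [Gab _ l1] /and3P [_ _ l2].
move: Gab; rewrite (tree_le_antisym rst l1 l2); by case: sG => _ ->.
Qed.

Lemma ang_anti a b : G a b -> ang b a = - ang a b.
Proof.
move=> Gab; rewrite /ang.
case: (eqVneq (p b) a) => hb.
  have -> : (p a == b) = false.
    apply/negbTE/eqP => ha; have e := no2cycle rst ha hb.
    by move: Gab; rewrite e; case: sG => _ ->.
  by [].
case: (eqVneq (p a) b) => ha; first by rewrite opprK.
case: (boolP (fundamental G p b a)) => fba.
  have -> : fundamental G p a b = false.
    by apply/negbTE/negP => fab; apply: (fund_excl fab fba).
  done.
case: (boolP (fundamental G p a b)) => fab; first by rewrite opprK.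
by rewrite oppr0.
Qed.

Lemma ang_bound a b : bnd (ang a b).
Proof.
rewrite /ang; case: ifP => _; first exact: gw_bound.
case: ifP => _; first exact/bndN/gw_bound.
case: ifP => F; first exact: theta_bound.
case: ifP => F'; first exact/bndN/theta_bound.
exact: bnd0.
Qed.

End Main.

Theorem theorem4p1 (R : realType) (n : nat) (G : rel 'I_n) :
  simple_graph G -> connected_graph G -> cycles_vertex_disjoint G ->
  forall (rt : 'I_n) (p : 'I_n -> 'I_n),
    rooted_spanning_tree G rt p -> normal_tree G p -> GNRP R G p.
Proof.
move=> sG _ cvd rt p rst _ r hr.
exists (fun a b => expi (ang G p r a b)); split.
- move=> a b Gab; split; first exact: norm_expi.
  by rewrite (ang_anti r sG rst Gab) expiN.
- move=> s t F; rewrite /fund_cycle_gain.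
  rewrite (eq_bigr (fun _ => expi (theta p r s t))); last first.
    move=> k _; rewrite /ang iterS eqxx (gw_theta r sG rst cvd F) //.
    by apply/trajectP; exists k.
  have [Gst tst _] := and3P F.
  have -> : ang G p r t s = theta p r s t.
    move: tst; rewrite /ang /tree_edge negb_or => /andP [/negbTE -> /negbTE ->].
    by rewrite F.
  rewrite prodr_const card_ord -exprSr expiX -mulr_natr /theta.
  have L0 : ((index s (traject p t n)).+1)%:R != 0 :> R by rewrite pnatr_eq0.
  case: ifP => _; rewrite divfK //; exact: expi2pi.
- move=> a b; rewrite mxE; case: ifP => Gab; last by [].
  rewrite Re_expi; apply: cos_ge0_pihalf; exact: ang_bound.
Qed.
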